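(* In the setting below, the cokernel $A/\rho(G)$ of $\rho\colon G\to A$ is abelian.
   Context: Let $G$ be a group generated by $a_1,\dots,a_n$ with $z=a_1\cdots a_n$ central. Let $S_1,\dots,S_m\subseteq\{1,\dots,n\}$ with $|S_i\cap S_r|\le1$ for $i\neq r$. For $S\subseteq\{1,\dots,n\}$ let $G_S$ be the quotient of $G$ by the normal closure of $\{a_j:j\notin S\}$; let $a_{ij}$ be the image of $a_j$ in $G_{S_i}$ and $z_i=a_{i1}\cdots a_{in}$ (central in $G_{S_i}$). Assume each $G_{S_i}/\langle z_i\rangle$ is free of rank $|S_i|-1$, the images of any $|S_i|-1$ of the $a_{ij}$, $j\in S_i$, forming a free basis. Let $A=\prod_{i=1}^mG_{S_i}$ and $\rho\colon G\to A$ the product of the projections; $\rho(G)$ is normal in $A$. *)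

(* Defs.v *)
From HB Require Import structures.
From mathcomp Require Import all_boot.
Set Implicit Arguments. Unset Strict Implicit. Unset Printing Implicit Defensive.
Local Open Scope group_scope.

Definition is_subgroup (G : groupType) (N : G -> Prop) : Prop :=
  [/\ N 1, (forall x y, N x -> N y -> N (x * y)) & (forall x, N x -> N x^-1)].

Definition is_normal_subgroup (G : groupType) (N : G -> Prop) : Prop :=
  is_subgroup N /\ (forall x g, N x -> N (g^-1 * x * g)).

Definition in_generated (G : groupType) (P : G -> Prop) (g : G) : Prop :=
  forall N : G -> Prop, is_subgroup N -> (forall x, P x -> N x) -> N g.

Definition in_normal_closure (G : groupType) (P : G -> Prop) (g : G) : Prop :=
  forall N : G -> Prop, is_normal_subgroup N -> (forall x, P x -> N x) -> N g.

Definition is_hom (G K : groupType) (f : G -> K) : Prop :=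
  forall x y, f (x * y) = f x * f y.

Definition free_basis (F : groupType) (I : Type) (b : I -> F) : Prop :=
  forall (K : groupType) (f : I -> K),
    exists phi : F -> K,
      [/\ is_hom phi, (forall i, phi (b i) = f i) &
          (forall psi : F -> K, is_hom psi -> (forall i, psi (b i) = f i) ->
             forall x, psi x = phi x)].

(* Main.v *)
Require Import Defs.
From HB Require Import structures.
From mathcomp Require Import all_boot.
Local Open Scope group_scope.
Set Implicit Arguments. Unset Strict Implicit.

Lemma id_mul (K : groupType) (u v1 v2 : K) :
  (u*(v1*v2))^-1 * ((v1*v2)*u) = ((v2^-1 * ((u*v1)^-1*(v1*u)) * v2)) * ((u*v2)^-1*(v2*u)).
Proof. by rewrite !invgM !mulgA !mulgK. Qed.
Lemma id_inv (K : groupType) (u v : K) :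
  (u*v^-1)^-1*(v^-1*u) = v^-1^-1 * ((u*v)^-1*(v*u))^-1 * v^-1.
Proof. by rewrite !invgM !invgK !mulgA !mulgK. Qed.
Lemma id_sym (K : groupType) (u v : K) :
  (v*u)^-1*(u*v) = ((u*v)^-1*(v*u))^-1.
Proof. by rewrite !invgM !invgK !mulgA. Qed.

Lemma hom1 (A B : groupType) (f : A -> B) : is_hom f -> f 1 = 1.
Proof. move=> h; apply: (mulgI (f 1)); by rewrite mulg1 -h mulg1. Qed.
Lemma homV (A B : groupType) (f : A -> B) : is_hom f -> forall x, f x^-1 = (f x)^-1.
Proof. move=> h x; apply: (mulgI (f x)); by rewrite -h !mulgV hom1. Qed.

Section Main.
Variables (n m : nat) (G : groupType) (a : 'I_n -> G)
  (a_gen : forall g : G, in_generated (fun x => exists j, x = a j) g)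
  (S : 'I_m -> {set 'I_n})
  (S_inter : forall i r : 'I_m, i != r -> #|S i :&: S r| <= 1)
  (H : 'I_m -> groupType) (pi : forall i, G -> H i)
  (pi_hom : forall i, is_hom (pi i))
  (pi_surj : forall i (h : H i), exists g, pi i g = h)
  (pi_ker : forall i g, pi i g = 1 <->
       in_normal_closure (fun x => exists2 j, j \notin S i & x = a j) g).

Definition Kp i (k : G) := forall r, r != i -> pi r k = 1.
Definition Np i (h : H i) := exists k, Kp i k /\ pi i k = h.
Definition cp i (u v : H i) := @Np i ((u*v)^-1*(v*u)).

Lemma Kp1 i : Kp i 1. Proof. by move=> r _; rewrite hom1. Qed.
Lemma KpM i k1 k2 : Kp i k1 -> Kp i k2 -> Kp i (k1 * k2).
Proof. by move=> h1 h2 r hr; rewrite pi_hom h1 // h2 // mulg1. Qed.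
Lemma KpV i k : Kp i k -> Kp i k^-1.
Proof. by move=> h r hr; rewrite homV // h // invg1. Qed.
Lemma KpJ i k g : Kp i k -> Kp i (g^-1 * k * g).
Proof. by move=> h r hr; rewrite !pi_hom h // mulg1 homV // mulVg. Qed.

Lemma Np1 i : @Np i 1. Proof. by exists 1; split; [apply: Kp1| rewrite hom1]. Qed.
Lemma NpM i (x y : H i) : Np x -> Np y -> Np (x * y).
Proof. move=> [k1 [h1 <-]] [k2 [h2 <-]]; exists (k1*k2); split; [exact: KpM | by rewrite pi_hom]. Qed.
Lemma NpV i (x : H i) : Np x -> Np x^-1.
Proof. move=> [k1 [h1 <-]]; exists k1^-1; split; [exact: KpV | by rewrite homV]. Qed.
Lemma NpJ i (x h : H i) : Np x -> Np (h^-1 * x * h).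
Proof.
move=> [k1 [h1 <-]]; have [g <-] := pi_surj h.
exists (g^-1*k1*g); split; [exact: KpJ | by rewrite !pi_hom homV]. Qed.

Lemma cp1 i (u : H i) : cp u 1. Proof. by rewrite /cp mulg1 mul1g mulVg; apply: Np1. Qed.
Lemma cpM i (u v1 v2 : H i) : cp u v1 -> cp u v2 -> cp u (v1*v2).
Proof. by rewrite /cp => h1 h2; rewrite id_mul; apply: NpM => //; apply: NpJ. Qed.
Lemma cpV i (u v : H i) : cp u v -> cp u v^-1.
Proof. by rewrite /cp => h1; rewrite id_inv; apply: NpJ; apply: NpV. Qed.
Lemma cpS i (u v : H i) : cp u v -> cp v u.
Proof. by rewrite /cp => h1; rewrite id_sym; apply: NpV. Qed.

Lemma kill r j : j \notin S r -> pi r (a j) = 1.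
Proof. by move=> hj; apply/pi_ker => N _ HN; apply: HN; exists j. Qed.

Lemma cp_ext i (u : H i) : (forall j, cp u (pi i (a j))) -> forall g, cp u (pi i g).
Proof.
move=> hj g; apply: (@a_gen g (fun g => cp u (pi i g))); last by move=> _ [j ->].
split.
- by rewrite hom1 //; apply: cp1.
- by move=> x y hx hy; rewrite pi_hom; apply: cpM.
- by move=> x hx; rewrite homV //; apply: cpV.
Qed.

Lemma cp_gen i j k : cp (pi i (a j)) (pi i (a k)).
Proof.
have [->|njk] := eqVneq j k.
  by rewrite /cp mulVg; apply: Np1.
have [jS|jS] := boolP (j \in S i); last first.
  by rewrite kill // /cp mul1g mulg1 mulVg; apply: Np1.
have [kS|kS] := boolP (k \in S i); last first.
  by rewrite (kill kS) /cp mul1g mulg1 mulVg; apply: Np1.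
exists ((a j * a k)^-1 * (a k * a j)); split; last first.
  by rewrite !pi_hom homV // !pi_hom.
move=> r hr.
have : ~~ ((j \in S r) && (k \in S r)).
  apply/negP => /andP [jr kr].
  have := S_inter (i := i) (r := r); rewrite eq_sym => /(_ hr).
  have sub : [set j; k] \subset S i :&: S r.
    by apply/subsetP => t; rewrite !inE => /orP [/eqP -> | /eqP ->];
       rewrite ?jS ?jr ?kS ?kr.
  have := subset_leq_card sub; rewrite cards2 njk.
  move=> h1 h2; have := leq_trans h1 h2; by [].
rewrite negb_and => /orP [jr|kr].
  by rewrite !pi_hom homV // !pi_hom kill // mul1g mulg1 mulVg.
by rewrite !pi_hom homV // !pi_hom (kill kr) mul1g mulg1 mulVg.
Qed.

Lemma cp_all i (u v : H i) : cp u v.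
Proof.
have [g <-] := pi_surj u; have [g' <-] := pi_surj v.
apply: cp_ext => k; apply: cpS; apply: cp_ext => j; apply: cpS; apply: cp_gen.
Qed.

Lemma assemble (t : forall i, H i) :
  (forall i, Np (t i)) -> forall s : seq 'I_m, uniq s ->
  exists g, forall r, pi r g = if r \in s then t r else 1.
Proof.
move=> ht; elim => [|i s IH] /=.
  by move=> _; exists 1 => r; rewrite hom1.
move=> /andP [ni us]; have [g hg] := IH us.
have [k [hk ek]] := ht i.
exists (k * g) => r; rewrite pi_hom hg inE.
have [->|nri] := eqVneq r i.
  by rewrite (negbTE ni) mulg1 /=.
by rewrite hk // mul1g.
Qed.

End Main.
Theorem mainTheorem13
  (n m : nat) (G : groupType) (a : 'I_n -> G)
  (* G is generated by a_1, ..., a_n *)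
  (a_gen : forall g : G, in_generated (fun x => exists j, x = a j) g)
  (* z = a_1 ... a_n is central *)
  (z_central : forall g : G, (\prod_(j < n) a j) * g = g * (\prod_(j < n) a j))
  (S : 'I_m -> {set 'I_n})
  (S_inter : forall i r : 'I_m, i != r -> #|S i :&: S r| <= 1)
  (* G_{S_i}, given as a quotient map pi_i : G ->> H_i with kernel the
     normal closure of {a_j : j \notin S_i} *)
  (H : 'I_m -> groupType) (pi : forall i, G -> H i)
  (pi_hom : forall i, is_hom (pi i))
  (pi_surj : forall i (h : H i), exists g, pi i g = h)
  (pi_ker : forall i g, pi i g = 1 <->
       in_normal_closure (fun x => exists2 j, j \notin S i & x = a j) g)
  (* G_{S_i}/<z_i>, given as a quotient map q_i : H_i ->> Q_i with kernel <z_i>,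
     z_i = a_{i1} ... a_{in} *)
  (Q : 'I_m -> groupType) (q : forall i, H i -> Q i)
  (q_hom : forall i, is_hom (q i))
  (q_surj : forall i (y : Q i), exists h, q i h = y)
  (q_ker : forall i h, q i h = 1 <->
       in_generated (fun x => x = \prod_(j < n) pi i (a j)) h)
  (* G_{S_i}/<z_i> is free of rank |S_i| - 1, any |S_i| - 1 of the images of
     the a_{ij}, j \in S_i, forming a free basis *)
  (S_nonempty : forall i, 0 < #|S i|)
  (free : forall i (j0 : 'I_n), j0 \in S i ->
       free_basis (fun j : {j : 'I_n | (j \in S i) && (j != j0)} =>
                     q i (pi i (a (val j))))) :
  (* A = prod_i G_{S_i}, rho = (pi_i)_i : the cokernel A / rho(G) is abelian,
     i.e. x y and y x lie in the same coset of rho(G) for all x, y in A *)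
  forall x y : (forall i : 'I_m, H i),
    exists g : G, forall i : 'I_m, y i * x i = (x i * y i) * pi i g.
Proof.
move=> x y.
have hN : forall i, Np pi ((x i * y i)^-1 * (y i * x i)).
  by move=> i; apply: (cp_all a_gen S_inter pi_hom pi_surj pi_ker).
have [g hg] := assemble pi_hom hN (enum_uniq 'I_m).
exists g => i; rewrite hg mem_enum mulgA.
by rewrite mulgA mulgV mul1g.
Qed.
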